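(* Let $d\ge2$, $F\in(0,1)$ with $F\ne\frac12$, and let $\rho_0=F|\mathrm{GHZ}_d\rangle\langle\mathrm{GHZ}_d|+(1-F)Z_1|\mathrm{GHZ}_d\rangle\langle\mathrm{GHZ}_d|Z_1$, where $|\mathrm{GHZ}_d\rangle=(|0\cdots0\rangle+|1\cdots1\rangle)/\sqrt2$ and $Z_1$ is $\sigma_z$ on the first qubit. Let $\rho_x=U(x)\rho_0U(x)^\dagger$ with $U(x)=\exp[-\frac i2\sum_{i=1}^d x_i\sigma_z^{(i)}]$, and for $\alpha\in\mathbb{R}$ let $M(\alpha)=O(\alpha)^{\otimes d}$, $O(\alpha)=e^{i\alpha}|1\rangle\langle0|+e^{-i\alpha}|0\rangle\langle1|$. For $\alpha$ with $\sin(d\alpha)\neq0$ the error-propagation variance at $x=0$, $$V(\alpha)=\frac{\langle M(\alpha)^2\rangle-\langle M(\alpha)\rangle^2}{\big|v_1\cdot\nabla_x\langle M(\alpha)\rangle\big|^2}\Bigg|_{x=0},\quad \langle A\rangle=\mathrm{Tr}(\rho_xA),\ v_1=\tfrac{1}{\sqrt d}(1,\dots,1)^T,$$ equals $\frac{1-(2F-1)^2\cos^2(d\alpha)}{d(2F-1)^2\sin^2(d\alpha)}$; it is minimized exactly at $\alpha=\frac{(2l+1)\pi}{2d}$, $l\in\mathbb{Z}$, and the minimum value is $\frac{1}{d(2F-1)^2}$, which equals $1/\big(d(1-C)\big)$ with $C=4F(1-F)$, the inverse of the quantum Fisher information $d(1-C)$ for $\theta_1=v_1^Tx$ of this state.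
   Context: For a GHZ-diagonal $d$-qubit state with eigenvalues $\lambda^\pm_s$ on $|G^\pm_s\rangle=(|s\rangle\pm|\bar s\rangle)/\sqrt2$ (one representative $s$ per complementary pair of bit strings), $C=\sum_s\frac{4\lambda^+_s\lambda^-_s}{\lambda^+_s+\lambda^-_s}$ with terms having $\lambda^+_s+\lambda^-_s=0$ set to $0$; for the state $\rho_0$ above this gives $C=4F(1-F)$. The quantum Fisher information for $\theta_1$ under the encoding $U(x)$ is $d(1-C)$, so the claim says this measurement saturates the quantum Cramér–Rao bound. *)

(* Defs.v *)
From HB Require Import structures.
From mathcomp Require Import all_boot all_order all_algebra.
From mathcomp Require Import all_classical all_reals all_analysis.
From mathcomp Require Import complex.
Set Implicit Arguments.
Unset Strict Implicit.
Unset Printing Implicit Defensive.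
Import Order.TTheory GRing.Theory Num.Theory.
Local Open Scope ring_scope.

Section GHZ.
Variables (R : realType) (d : nat).
Local Notation C := (R[i]).

(* computational basis of d qubits: bit strings s = (s_1,...,s_d),
   qubit i (0-based index) is [tnth s i] *)
Definition basis := (d.-tuple bool).

(* operators on (C^2)^{\otimes d}, given by their matrix entries <s|A|t> *)
Definition op := basis -> basis -> C.

Definition op_mul (A B : op) : op := fun s t => \sum_(k : basis) A s k * B k t.
Definition op_adj (A : op) : op := fun s t => conjc (A t s).
Definition op_add (A B : op) : op := fun s t => A s t + B s t.
Definition op_scale (c : C) (A : op) : op := fun s t => c * A s t.
Definition op_trace (A : op) : C := \sum_(s : basis) A s s.
Definition diag_op (f : basis -> C) : op := fun s t => if s == t then f s else 0.

Definition rC (r : R) : C := Complex r 0.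
Definition expi (th : R) : C := Complex (cos th) (sin th).

Definition zeros : basis := [tuple of nseq d false].
Definition ones : basis := [tuple of nseq d true].

Definition ghz (s : basis) : C :=
  if (s == zeros) || (s == ones) then rC (Num.sqrt 2)^-1 else 0.

Definition proj (psi : basis -> C) : op := fun s t => psi s * conjc (psi t).

(* eigenvalue of sigma_z on qubit i in basis state s: +1 for |0>, -1 for |1> *)
Definition zval (i : 'I_d) (s : basis) : R := if tnth s i then -1 else 1.

Definition Z1 : op := diag_op (fun s => if nth false s 0 then -1 else 1).

Definition rho0 (F : R) : op :=
  op_add (op_scale (rC F) (proj ghz))
         (op_scale (rC (1 - F)) (op_mul Z1 (op_mul (proj ghz) Z1))).

(* U(x) = exp[-(i/2) sum_i x_i sigma_z^(i)]; this operator is diagonal in the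
   computational basis, with entry exp[-(i/2) sum_i x_i z_i(s)] *)
Definition Uenc (x : 'I_d -> R) : op :=
  diag_op (fun s => expi (- (\sum_(i < d) x i * zval i s) / 2)).

Definition rho_x (F : R) (x : 'I_d -> R) : op :=
  op_mul (Uenc x) (op_mul (rho0 F) (op_adj (Uenc x))).

Definition Oa (a : R) (b c : bool) : C :=
  match b, c with
  | true, false => expi a
  | false, true => expi (- a)
  | _, _ => 0
  end.

Definition Mop (a : R) : op := fun s t => \prod_(i < d) Oa a (tnth s i) (tnth t i).

(* <A> = Tr(rho_x A) (real part; it is real for Hermitian A) *)
Definition expval (F : R) (A : op) (x : 'I_d -> R) : R :=
  complex.Re (op_trace (op_mul (rho_x F x) A)).

Definition partial (f : ('I_d -> R) -> R) (i : 'I_d) (x : 'I_d -> R) : R :=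
  derive1 (fun t : R => f (fun j => x j + (if j == i then t else 0))) 0.

Definition v1 (i : 'I_d) : R := (Num.sqrt d%:R)^-1.

Definition v1_grad (f : ('I_d -> R) -> R) (x : 'I_d -> R) : R :=
  \sum_(i < d) v1 i * partial f i x.

Definition x0 : 'I_d -> R := fun _ => 0.

Definition Verr (F a : R) : R :=
  (expval F (op_mul (Mop a) (Mop a)) x0 - (expval F (Mop a) x0) ^+ 2)
  / (`| v1_grad (expval F (Mop a)) x0 |) ^+ 2.

Definition compl (s : basis) : basis := [tuple of map negb s].
Definition ghz_pm (sg : bool) (s : basis) : basis -> C := fun t =>
  rC (Num.sqrt 2)^-1 *
  ((if t == s then 1 else 0) + (if sg then 1 else -1) * (if t == compl s then 1 else 0)).

Definition op_exp (A : op) (psi : basis -> C) : C :=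
  \sum_(s : basis) \sum_(t : basis) conjc (psi s) * A s t * psi t.

(* C = sum_s 4 l+_s l-_s/(l+_s + l-_s), one representative s per complementary
   pair (the one with first bit 0), terms with l+ + l- = 0 set to 0;
   l^pm_s = <G^pm_s|rho|G^pm_s> are the eigenvalues of a GHZ-diagonal rho. *)
Definition ghzC (rho : op) : R :=
  \sum_(s : basis | ~~ nth false s 0)
    (let lp := complex.Re (op_exp rho (ghz_pm true s)) in
     let lm := complex.Re (op_exp rho (ghz_pm false s)) in
     if lp + lm == 0 then 0 else 4 * lp * lm / (lp + lm)).

Definition qfi (rho : op) : R := d%:R * (1 - ghzC rho).

End GHZ.

(* Main.v *)
Require Import Defs.
From HB Require Import structures.
From mathcomp Require Import all_boot all_order all_algebra.
From mathcomp Require Import all_classical all_reals all_analysis.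
From mathcomp Require Import complex.
From mathcomp Require Import ring lra.
Import Order.TTheory GRing.Theory Num.Theory.
Local Open Scope ring_scope.

Lemma sin_natpi (R : realType) (n : nat) : sin (n%:R * pi) = 0 :> R.
Proof.
elim: n => [|n IH]; first by rewrite mul0r sin0.
by rewrite -natr1 mulrDl mul1r sinDpi IH oppr0.
Qed.

Lemma sin_intpi (R : realType) (l : int) : sin (l%:~R * pi) = 0 :> R.
Proof.
case: l => n; first by rewrite sin_natpi.
by rewrite NegzE mulrNz mulNr sinN -[(n.+1)%:~R]/((n.+1)%:R) sin_natpi oppr0.
Qed.

Lemma cos_intpi_neq0 (R : realType) (l : int) : cos (l%:~R * pi) != 0 :> R.
Proof.
apply/eqP => h; have := @norm_cos_eq1 R (l%:~R * pi).
by rewrite sin_intpi eqxx h normr0 eq_sym oner_eq0.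
Qed.

Lemma cos_eq0P (R : realType) (y : R) : cos y = 0 <-> exists l : int, y = pi / 2 + l%:~R * pi.
Proof.
split; last first.
  by case=> l ->; rewrite cosD cos_pihalf sin_pihalf sin_intpi mul0r mulr0 subrr.
move=> hy.
have pi0 := pi_gt0 R.
set q := (y - pi / 2) / pi.
set l := Num.floor q.
have rE : y - pi / 2 - l%:~R * pi = (q - l%:~R) * pi.
  by rewrite mulrBl /q mulfVK // lt0r_neq0.
have r0 : 0 <= (q - l%:~R) * pi.
  by apply: mulr_ge0; [rewrite subr_ge0; exact: Num.Theory.floor_le | exact: ltW].
have rpi : (q - l%:~R) * pi < pi.
  rewrite -[ltRHS]mul1r ltr_pM2r // ltrBlDl addrC.
  by have := Num.Theory.floorD1_gt q; rewrite intrD addrC.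
set r := (q - l%:~R) * pi in rE r0 rpi.
have yE : y = (r + l%:~R * pi) + pi / 2 by rewrite -rE; ring.
move: hy; rewrite yE cosDpihalf sinD sin_intpi mulr0 addr0 => /eqP.
rewrite oppr_eq0 mulf_eq0 (negbTE (@cos_intpi_neq0 R l)) orbF => /eqP sr0.
exists l.
suff -> : r = 0 by rewrite add0r addrC.
apply/eqP; apply/negPn/negP => rpos.
have : 0 < sin r by apply: sin_gt0_pi; rewrite rpi andbT lt0r rpos.
by rewrite sr0 ltxx.
Qed.


Set Implicit Arguments.
Unset Strict Implicit.
Unset Printing Implicit Defensive.

Lemma expiD (R : realType) (a b : R) : expi a * expi b = expi (a + b).
Proof.
rewrite /expi cosD sinD; simpc; congr Complex; ring.
Qed.

Lemma conj_expi (R : realType) (a : R) : conjc (expi a) = expi (- a).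
Proof. by rewrite /expi cosN sinN. Qed.

Lemma expi0 (R : realType) : expi (0 : R) = 1.
Proof. by rewrite /expi cos0 sin0. Qed.

Lemma expiX (R : realType) (a : R) n : expi a ^+ n = expi (n%:R * a).
Proof.
elim: n => [|n IH]; first by rewrite expr0 mul0r expi0.
by rewrite exprS IH expiD -natr1; congr expi; ring.
Qed.

Lemma Re_rC_expi (R : realType) (c e : R) : complex.Re (rC c * expi e) = c * cos e.
Proof. by rewrite /rC /expi; simpc. Qed.

Lemma ReD (R : realType) (x y : R[i]) : complex.Re (x + y) = complex.Re x + complex.Re y.
Proof. by case: x; case: y. Qed.

Lemma conj_rC (R : realType) (c : R) : conjc (rC c) = rC c.
Proof. by rewrite /rC /= oppr0. Qed.

Lemma rCM (R : realType) (a b : R) : rC a * rC b = rC (a * b).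
Proof. by rewrite /rC; simpc. Qed.

Lemma rCD (R : realType) (a b : R) : rC a + rC b = rC (a + b).
Proof. by rewrite /rC; simpc. Qed.

Lemma rCN (R : realType) (a : R) : - rC a = rC (- a).
Proof. by rewrite /rC; simpc. Qed.

Lemma rC1 (R : realType) : rC (1 : R) = 1.
Proof. by []. Qed.


Lemma zeros_neq_ones (d : nat) : (0 < d)%N -> zeros d != ones d.
Proof.
move=> d0; apply/eqP => h.
have := congr1 (fun s : Defs.basis d => tnth s (Ordinal d0)) h.
by rewrite /= !tnth_nseq.
Qed.

Lemma tnth_zeros d i : tnth (zeros d) i = false.
Proof. exact: tnth_nseq. Qed.

Lemma tnth_ones d i : tnth (ones d) i = true.
Proof. exact: tnth_nseq. Qed.

Lemma nth_zeros d : nth false (zeros d) 0 = false.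
Proof. by rewrite /= nth_nseq; case: ifP. Qed.

Lemma nth_ones d : (0 < d)%N -> nth false (ones d) 0 = true.
Proof. by move=> d0; rewrite /= nth_nseq d0. Qed.

Lemma compl_zeros d : compl (zeros d) = ones d.
Proof. by apply: eq_from_tnth => i; rewrite tnth_map !tnth_nseq. Qed.

Lemma compl_ones d : compl (ones d) = zeros d.
Proof. by apply: eq_from_tnth => i; rewrite tnth_map !tnth_nseq. Qed.

Lemma complK d (s : Defs.basis d) : compl (compl s) = s.
Proof. by apply: eq_from_tnth => i; rewrite !tnth_map negbK. Qed.

Lemma sum2 (R : realType) (d : nat) (f : Defs.basis d -> R[i]) : (0 < d)%N ->
  (forall s, s != zeros d -> s != ones d -> f s = 0) ->
  \sum_s f s = f (zeros d) + f (ones d).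
Proof.
move=> d0 hf.
rewrite (bigD1 (zeros d)) //= (bigD1 (ones d)) /=; last first.
  by rewrite eq_sym zeros_neq_ones.
rewrite big1 ?addr0 // => s /andP[so sz]; exact: hf.
Qed.

Lemma mul_diag_l (R : realType) (d : nat) (f : Defs.basis d -> R[i]) (A : Defs.op R d) s t :
  op_mul (diag_op f) A s t = f s * A s t.
Proof.
rewrite /op_mul (bigD1 s) //= /diag_op eqxx big1 ?addr0 // => k.
by rewrite eq_sym => /negbTE ->; rewrite mul0r.
Qed.

Lemma mul_diag_r (R : realType) (d : nat) (f : Defs.basis d -> R[i]) (A : Defs.op R d) s t :
  op_mul A (diag_op f) s t = A s t * f t.
Proof.
rewrite /op_mul (bigD1 t) //= /diag_op eqxx big1 ?addr0 // => k.
by move=> /negbTE ->; rewrite mulr0.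
Qed.

Lemma adj_diag (R : realType) (d : nat) (f : Defs.basis d -> R[i]) :
  op_adj (diag_op f) = diag_op (fun s => conjc (f s)).
Proof.
apply/funext => s; apply/funext => t; rewrite /op_adj /diag_op eq_sym.
case: eqP => [->|_] //; by apply/eqP; rewrite eq_complex /= oppr0 !eqxx.
Qed.

Definition Ue (R : realType) (d : nat) (x : 'I_d -> R) (s : Defs.basis d) : R[i] :=
  expi (- (\sum_(i < d) x i * zval R i s) / 2).

Definition z1 (R : realType) (d : nat) (s : Defs.basis d) : R[i] :=
  if nth false s 0 then -1 else 1.

Lemma rho_xE (R : realType) (d : nat) (F : R) (x : 'I_d -> R) (s t : Defs.basis d) :
  rho_x F x s t = Ue x s * (rho0 F s t * conjc (Ue x t)).
Proof. by rewrite /rho_x /Uenc mul_diag_l adj_diag mul_diag_r. Qed.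

Lemma rho0E (R : realType) (d : nat) (F : R) (s t : Defs.basis d) :
  rho0 F s t = rC F * (ghz R s * conjc (ghz R t))
     + rC (1 - F) * (z1 R s * (ghz R s * conjc (ghz R t) * z1 R t)).
Proof. by rewrite /rho0 /op_add /op_scale /Z1 mul_diag_l mul_diag_r. Qed.

Definition zo (d : nat) (s : Defs.basis d) := (s == zeros d) || (s == ones d).

Lemma sqrt2_inv_sq (R : realType) : (Num.sqrt (2 : R))^-1 * (Num.sqrt 2)^-1 = 2^-1.
Proof. by rewrite -invfM -expr2 sqr_sqrtr // ler0n. Qed.

Lemma ghz_zeros (R : realType) (d : nat) : ghz R (zeros d) = rC (Num.sqrt 2)^-1.
Proof. by rewrite /ghz eqxx. Qed.

Lemma ghz_ones (R : realType) (d : nat) : ghz R (ones d) = rC (Num.sqrt 2)^-1.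
Proof. by rewrite /ghz eqxx orbT. Qed.

Lemma ghz_other (R : realType) (d : nat) (s : Defs.basis d) : ~~ zo s -> ghz R s = 0.
Proof. by rewrite /ghz /zo => /negbTE ->. Qed.

Lemma z1_zeros (R : realType) (d : nat) : z1 R (zeros d) = rC 1.
Proof. by rewrite /z1 nth_zeros. Qed.

Lemma z1_ones (R : realType) (d : nat) : (0 < d)%N -> z1 R (ones d) = rC (-1).
Proof. by move=> d0; rewrite /z1 nth_ones // -rCN. Qed.

Lemma rho0_supp (R : realType) (d : nat) (F : R) (s t : Defs.basis d) :
  ~~ zo s || ~~ zo t -> rho0 F s t = 0.
Proof.
rewrite rho0E => /orP[h|h]; rewrite (ghz_other R h) ?conjc0;
  try by rewrite !(mul0r, mulr0, addr0).
Qed.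

Lemma rho0_zz (R : realType) (d : nat) (F : R) : rho0 F (zeros d) (zeros d) = rC 2^-1.
Proof.
rewrite rho0E ghz_zeros conj_rC z1_zeros !rCM rCD; congr rC.
by rewrite sqrt2_inv_sq; ring.
Qed.

Lemma rho0_oo (R : realType) (d : nat) (F : R) : (0 < d)%N -> rho0 F (ones d) (ones d) = rC 2^-1.
Proof.
move=> d0; rewrite rho0E ghz_ones conj_rC z1_ones // !rCM rCD; congr rC.
by rewrite sqrt2_inv_sq; ring.
Qed.

Lemma rho0_zo (R : realType) (d : nat) (F : R) : (0 < d)%N ->
  rho0 F (zeros d) (ones d) = rC ((2 * F - 1) / 2).
Proof.
move=> d0; rewrite rho0E ghz_ones ghz_zeros conj_rC z1_ones // z1_zeros !rCM rCD; congr rC.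
by rewrite sqrt2_inv_sq; ring.
Qed.

Lemma rho0_oz (R : realType) (d : nat) (F : R) : (0 < d)%N ->
  rho0 F (ones d) (zeros d) = rC ((2 * F - 1) / 2).
Proof.
move=> d0; rewrite rho0E ghz_ones ghz_zeros conj_rC z1_ones // z1_zeros !rCM rCD; congr rC.
by rewrite sqrt2_inv_sq; ring.
Qed.

Definition ph (R : realType) (d : nat) (x : 'I_d -> R) (s : Defs.basis d) : R :=
  - (\sum_(i < d) x i * zval R i s) / 2.

Lemma rho_xE' (R : realType) (d : nat) (F : R) (x : 'I_d -> R) (s t : Defs.basis d) :
  rho_x F x s t = rho0 F s t * expi (ph x s - ph x t).
Proof. by rewrite rho_xE /Ue conj_expi mulrCA expiD. Qed.

Lemma ph_zeros (R : realType) (d : nat) (x : 'I_d -> R) :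
  ph x (zeros d) = - (\sum_i x i) / 2.
Proof.
rewrite /ph; congr (- _ / _); apply: eq_bigr => i _.
by rewrite /zval tnth_zeros mulr1.
Qed.

Lemma ph_ones (R : realType) (d : nat) (x : 'I_d -> R) :
  ph x (ones d) = (\sum_i x i) / 2.
Proof.
rewrite /ph -sumrN; congr (_ / _); apply: eq_bigr => i _.
by rewrite /zval tnth_ones mulrN1 opprK.
Qed.

Lemma rho_x_supp (R : realType) (d : nat) (F : R) (x : 'I_d -> R) (s t : Defs.basis d) :
  ~~ zo s || ~~ zo t -> rho_x F x s t = 0.
Proof. by move=> h; rewrite rho_xE' rho0_supp // mul0r. Qed.

Lemma trace_red (R : realType) (d : nat) (A B : Defs.op R d) : (0 < d)%N ->
  (forall s t, ~~ zo s || ~~ zo t -> A s t = 0) ->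
  op_trace (op_mul A B) =
    A (zeros d) (zeros d) * B (zeros d) (zeros d) + A (zeros d) (ones d) * B (ones d) (zeros d)
  + (A (ones d) (zeros d) * B (zeros d) (ones d) + A (ones d) (ones d) * B (ones d) (ones d)).
Proof.
move=> d0 hA; rewrite /op_trace /op_mul sum2 //; last first.
  move=> s sz so; rewrite big1 // => k _; rewrite hA ?mul0r //.
  by rewrite /zo (negbTE sz) (negbTE so).
rewrite !sum2 // => k kz ko; rewrite hA ?mul0r //;
  by rewrite /zo (negbTE kz) (negbTE ko) orbT.
Qed.

Lemma M_zo (R : realType) (d : nat) (a : R) : @Mop R d a (zeros d) (ones d) = expi (- a) ^+ d.
Proof.
rewrite /Mop (eq_bigr (fun _ => expi (- a))) ?prodr_const ?card_ord // => i _.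
by rewrite tnth_zeros tnth_ones.
Qed.

Lemma M_oz (R : realType) (d : nat) (a : R) : @Mop R d a (ones d) (zeros d) = expi a ^+ d.
Proof.
rewrite /Mop (eq_bigr (fun _ => expi a)) ?prodr_const ?card_ord // => i _.
by rewrite tnth_zeros tnth_ones.
Qed.

Lemma M_z (R : realType) (d : nat) (a : R) (k : Defs.basis d) :
  k != ones d -> @Mop R d a (zeros d) k = 0.
Proof.
move=> hk.
have [i hi] : exists i, tnth k i = false.
  case: (pickP (fun i => ~~ tnth k i)) => [i /negbTE hi|h]; first by exists i.
  exfalso; move/eqP: hk; apply; apply: eq_from_tnth => i.
  by rewrite tnth_ones; have := h i => /negbFE.
by rewrite /Mop (bigD1 i) //= tnth_zeros hi /= mul0r.
Qed.

Lemma M_o (R : realType) (d : nat) (a : R) (k : Defs.basis d) :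
  k != zeros d -> @Mop R d a (ones d) k = 0.
Proof.
move=> hk.
have [i hi] : exists i, tnth k i = true.
  case: (pickP (fun i => tnth k i)) => [i hi|h]; first by exists i.
  exfalso; move/eqP: hk; apply; apply: eq_from_tnth => i.
  by rewrite tnth_zeros; have := h i.
by rewrite /Mop (bigD1 i) //= tnth_ones hi /= mul0r.
Qed.

Lemma MM_z (R : realType) (d : nat) (a : R) (t : Defs.basis d) :
  op_mul (@Mop R d a) (@Mop R d a) (zeros d) t = @Mop R d a (zeros d) (ones d) * @Mop R d a (ones d) t.
Proof.
rewrite /op_mul (bigD1 (ones d)) //= big1 ?addr0 // => k hk.
by rewrite M_z ?mul0r.
Qed.

Lemma MM_o (R : realType) (d : nat) (a : R) (t : Defs.basis d) :
  op_mul (@Mop R d a) (@Mop R d a) (ones d) t = @Mop R d a (ones d) (zeros d) * @Mop R d a (zeros d) t.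
Proof.
rewrite /op_mul (bigD1 (zeros d)) //= big1 ?addr0 // => k hk.
by rewrite M_o ?mul0r.
Qed.

Lemma expval_M (R : realType) (d : nat) (F a : R) (x : 'I_d -> R) : (0 < d)%N ->
  expval F (@Mop R d a) x = (2 * F - 1) * cos (d%:R * a - \sum_i x i).
Proof.
move=> d0; rewrite /expval trace_red //; last by move=> s t; exact: rho_x_supp.
rewrite (@M_z R d a (zeros d)) ?(@M_o R d a (ones d)) ?zeros_neq_ones // 1?eq_sym ?zeros_neq_ones //.
rewrite M_zo M_oz !mulr0 add0r addr0.
rewrite !rho_xE' rho0_zo // rho0_oz // ph_zeros ph_ones !expiX -!mulrA !expiD.
rewrite ReD !Re_rC_expi.
set X := \sum_i x i.
rewrite (_ : - X / 2 - X / 2 + d%:R * a = d%:R * a - X); last by field.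
rewrite (_ : X / 2 - - X / 2 + d%:R * - a = - (d%:R * a - X)); last by field.
rewrite cosN; lra.
Qed.

Lemma expval_MM (R : realType) (d : nat) (F a : R) (x : 'I_d -> R) : (0 < d)%N ->
  expval F (op_mul (@Mop R d a) (@Mop R d a)) x = 1.
Proof.
move=> d0; rewrite /expval trace_red //; last by move=> s t; exact: rho_x_supp.
rewrite !MM_z !MM_o (@M_z R d a (zeros d)) ?(@M_o R d a (ones d)) ?zeros_neq_ones // 1?eq_sym ?zeros_neq_ones //.
rewrite M_zo M_oz !mulr0 !add0r !addr0 !rho_xE' rho0_zz rho0_oo // !subrr expi0 !mulr1.
rewrite !expiX !expiD mulrN addNr addrN expi0 !mulr1 rCD /rC /=.
lra.
Qed.

Lemma dtest (R : realType) (k A B : R) :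
  derive1 (fun t : R => k * (A * cos t + B * sin t)) 0 = k * B.
Proof.
rewrite derive1E.
have -> : (fun t : R => k * (A * cos t + B * sin t)) = k \*: (A \*: cos + B \*: sin).
  by apply/funext => t.
rewrite derive_val.
by rewrite sin0 cos0 oppr0 scaler0 add0r /GRing.scale /= mulr1.
Qed.

Lemma partialM (R : realType) (d : nat) (F a : R) (i : 'I_d) : (0 < d)%N ->
  partial (expval F (@Mop R d a)) i (@x0 R d) = (2 * F - 1) * sin (d%:R * a).
Proof.
move=> d0; rewrite /partial.
have -> : (fun t : R => expval F (@Mop R d a) (fun j => @x0 R d j + (if j == i then t else 0)))
   = (fun t : R => (2 * F - 1) * (cos (d%:R * a) * cos t + sin (d%:R * a) * sin t)).
  apply/funext => t; rewrite expval_M //.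
  rewrite (eq_bigr (fun j => if j == i then t else 0)); last by move=> j _; rewrite /x0 add0r.
  by rewrite -big_mkcond big_pred1_eq cosB.
exact: dtest.
Qed.

Lemma v1_gradM (R : realType) (d : nat) (F a : R) : (0 < d)%N ->
  v1_grad (expval F (@Mop R d a)) (@x0 R d) =
  d%:R / Num.sqrt d%:R * ((2 * F - 1) * sin (d%:R * a)).
Proof.
move=> d0; rewrite /v1_grad (eq_bigr (fun _ => (Num.sqrt d%:R)^-1 * ((2 * F - 1) * sin (d%:R * a)))).
  by rewrite sumr_const card_ord; ring.
by move=> i _; rewrite partialM.
Qed.

Lemma VerrE (R : realType) (d : nat) (F a : R) : (0 < d)%N ->
  Verr d F a = (1 - (2 * F - 1) ^+ 2 * (cos (d%:R * a)) ^+ 2)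
     / (d%:R * (2 * F - 1) ^+ 2 * (sin (d%:R * a)) ^+ 2).
Proof.
move=> d0; rewrite /Verr expval_MM // expval_M // v1_gradM //.
rewrite real_normK ?num_real // big1 ?subr0 //.
have hs : Num.sqrt (d%:R : R) ^+ 2 = d%:R by rewrite sqr_sqrtr // ler0n.
have s0 : Num.sqrt (d%:R : R) != 0.
  by rewrite sqrtr_eq0 -ltNge ltr0n.
have -> : (d%:R / Num.sqrt d%:R * ((2 * F - 1) * sin (d%:R * a))) ^+ 2
   = d%:R * ((2 * F - 1) * sin (d%:R * a)) ^+ 2.
  rewrite exprMn expr_div_n hs; congr (_ * _); rewrite expr2 -mulrA divff ?mulr1 //.
  by rewrite pnatr_eq0 -lt0n.
by congr ((1 - _) / _); [rewrite exprMn | rewrite exprMn mulrA].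
Qed.

Lemma op_exp_red (R : realType) (d : nat) (A : Defs.op R d) (psi : Defs.basis d -> R[i]) :
  (0 < d)%N -> (forall s t, ~~ zo s || ~~ zo t -> A s t = 0) ->
  op_exp A psi =
    (conjc (psi (zeros d)) * A (zeros d) (zeros d) * psi (zeros d)
     + conjc (psi (zeros d)) * A (zeros d) (ones d) * psi (ones d))
  + (conjc (psi (ones d)) * A (ones d) (zeros d) * psi (zeros d)
     + conjc (psi (ones d)) * A (ones d) (ones d) * psi (ones d)).
Proof.
move=> d0 hA; rewrite /op_exp sum2 //; last first.
  move=> s sz so; rewrite big1 // => k _; rewrite hA ?mulr0 ?mul0r //.
  by rewrite /zo (negbTE sz) (negbTE so).
rewrite !sum2 // => k kz ko; rewrite hA ?mulr0 ?mul0r //;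
  by rewrite /zo (negbTE kz) (negbTE ko) orbT.
Qed.

Lemma pm_zz (R : realType) (d : nat) sg : (0 < d)%N ->
  ghz_pm R sg (zeros d) (zeros d) = rC (Num.sqrt 2)^-1.
Proof.
move=> d0; rewrite /ghz_pm eqxx compl_zeros (negbTE (zeros_neq_ones d0)).
by rewrite mulr0 addr0 mulr1.
Qed.

Lemma pm_zo (R : realType) (d : nat) sg : (0 < d)%N ->
  ghz_pm R sg (zeros d) (ones d) = rC ((if sg then 1 else -1) * (Num.sqrt 2)^-1).
Proof.
move=> d0; rewrite /ghz_pm compl_zeros eqxx [ones d == zeros d]eq_sym (negbTE (zeros_neq_ones d0)).
by rewrite add0r mulr1 mulrC; case: sg; rewrite /rC; simpc.
Qed.

Lemma pm_other (R : realType) (d : nat) sg (s t : Defs.basis d) : (0 < d)%N ->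
  s != zeros d -> ~~ nth false s 0 -> zo t -> ghz_pm R sg s t = 0.
Proof.
move=> d0 sz sn; have so : s != ones d.
  by apply: contraNneq sn => ->; rewrite nth_ones.
rewrite /zo => /orP[]/eqP ->; rewrite /ghz_pm.
  rewrite eq_sym (negbTE sz); case: eqP => [h|_] /=; last by rewrite !(mulr0, addr0).
  by exfalso; move/eqP: so; apply; rewrite -(complK s) -h compl_zeros.
rewrite eq_sym (negbTE so); case: eqP => [h|_] /=; last by rewrite !(mulr0, addr0).
by exfalso; move/eqP: sz; apply; rewrite -(complK s) -h compl_ones.
Qed.

Lemma ghzC_rho0 (R : realType) (d : nat) (F : R) : (0 < d)%N ->
  ghzC (@rho0 R d F) = 4 * F * (1 - F).
Proof.
move=> d0; have supp := (fun s t => @rho0_supp R d F s t).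
rewrite /ghzC (bigD1 (zeros d)) ?nth_zeros //=.
rewrite big1 ?addr0; last first.
  move=> s /andP[sn sz].
  rewrite !(@op_exp_red R d (rho0 F) _ d0 supp).
  rewrite !(@pm_other R d _ s (zeros d)) ?(@pm_other R d _ s (ones d)) //;
    rewrite /zo ?eqxx ?orbT //.
  by rewrite !(mulr0, mul0r, addr0) /=; case: ifP.
rewrite !(@op_exp_red R d (rho0 F) _ d0 supp).
rewrite !pm_zz // !pm_zo // rho0_zz rho0_oo // rho0_zo // rho0_oz // !conj_rC !rCM !rCD /=.
have g2 := sqrt2_inv_sq R.
set g := (Num.sqrt (2 : R))^-1 in g2 *.
have hA : g / 2 * g + g * ((2 * F - 1) / 2) * (1 * g) +
    (1 * g * ((2 * F - 1) / 2) * g + 1 * g / 2 * (1 * g)) = F.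
  by transitivity (g * g * (2 * F)); [field | rewrite g2; field].
have hB : g / 2 * g + g * ((2 * F - 1) / 2) * (-1 * g) +
     (-1 * g * ((2 * F - 1) / 2) * g + -1 * g / 2 * (-1 * g)) = 1 - F.
  by transitivity (g * g * (2 - 2 * F)); [field | rewrite g2; field].
rewrite hA hB addrC subrK oner_eq0 divr1; ring.
Qed.

Theorem mainTheorem8 (R : realType) (d : nat) (F : R) :
  (2 <= d)%N -> 0 < F < 1 -> F != 2^-1 ->
  (* closed form of V(alpha) *)
  (forall a : R, sin (d%:R * a) != 0 ->
     Verr d F a =
     (1 - (2 * F - 1) ^+ 2 * (cos (d%:R * a)) ^+ 2)
     / (d%:R * (2 * F - 1) ^+ 2 * (sin (d%:R * a)) ^+ 2)) /\
  (* minimum value 1/(d(2F-1)^2) is a lower bound *)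
  (forall a : R, sin (d%:R * a) != 0 ->
     (d%:R * (2 * F - 1) ^+ 2)^-1 <= Verr d F a) /\
  (* attained exactly at alpha = (2l+1)pi/(2d) *)
  (forall a : R,
     (sin (d%:R * a) != 0 /\ Verr d F a = (d%:R * (2 * F - 1) ^+ 2)^-1) <->
     (exists l : int, a = (2 * l%:~R + 1) * pi / (2 * d%:R))) /\
  (* C = 4F(1-F) and minimum = 1/(d(1-C)) = inverse QFI *)
  ghzC (@rho0 R d F) = 4 * F * (1 - F) /\
  (d%:R * (2 * F - 1) ^+ 2)^-1 = (qfi (@rho0 R d F))^-1.
Proof.
move=> d2 /andP[F0 F1] Fh.
have d0 : (0 < d)%N by apply: leq_trans d2.
have dR : (0 : R) < d%:R by rewrite ltr0n.
have hF : 2 * F - 1 != 0.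
  apply: contra Fh => /eqP h; apply/eqP; lra.
have k0 : 0 < (2 * F - 1) ^+ 2 by rewrite lt0r sqrf_eq0 hF sqr_ge0.
have k1 : (2 * F - 1) ^+ 2 < 1 by nra.
have VE := VerrE F _ d0.
set k := (2 * F - 1) ^+ 2 in k0 k1 VE *.
split; first by move=> a _; exact: VE.
split.
  move=> a sa; rewrite VE cos2sin2.
  have S0 : 0 < sin (d%:R * a) ^+ 2 by rewrite lt0r sqrf_eq0 sa sqr_ge0.
  have S1 : sin (d%:R * a) ^+ 2 <= 1 by rewrite sin2cos2 lerBlDr lerDl sqr_ge0.
  set S := sin (d%:R * a) ^+ 2 in S0 S1 *.
  rewrite ler_pdivlMr; last exact: mulr_gt0 (mulr_gt0 dR k0) S0.
  rewrite (_ : (d%:R * k)^-1 * (d%:R * k * S) = S); last first.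
    by field; rewrite mulf_neq0 // lt0r_neq0.
  have h1 : 0 <= (1 - k) * (1 - S) by apply: mulr_ge0; lra.
  nra.
split.
  move=> a; split.
    case=> sa E.
    have S0 : 0 < sin (d%:R * a) ^+ 2 by rewrite lt0r sqrf_eq0 sa sqr_ge0.
    move: E; rewrite VE cos2sin2.
    set S := sin (d%:R * a) ^+ 2 in S0 *.
    move=> E.
    have hN : 1 - k * (1 - S) = (d%:R * k)^-1 * (d%:R * k * S).
      by rewrite -E divfK // !mulf_neq0 // lt0r_neq0.
    have hS : 1 - S = 0.
      have : (1 - k) * (1 - S) = 0.
        rewrite (_ : (d%:R * k)^-1 * (d%:R * k * S) = S) in hN; last first.
          by field; rewrite mulf_neq0 // lt0r_neq0.
        have -> : (1 - k) * (1 - S) = (1 - k * (1 - S)) - S by ring.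
        by rewrite hN subrr.
      by move/eqP; rewrite mulf_eq0 subr_eq0 (gt_eqF k1) /= => /eqP.
    have hc : cos (d%:R * a) = 0.
      by apply/eqP; rewrite -sqrf_eq0 cos2sin2 hS.
    have [l hl] := (@cos_eq0P R (d%:R * a)).1 hc.
    exists l.
    rewrite (_ : a = (d%:R * a) / d%:R); last by field; rewrite lt0r_neq0.
    rewrite hl; field; rewrite lt0r_neq0 //.
  case=> l ha.
  have hda : d%:R * a = pi / 2 + l%:~R * pi.
    by rewrite ha; field; rewrite lt0r_neq0.
  have hc : cos (d%:R * a) = 0 by apply/(@cos_eq0P R); exists l.
  have hs : sin (d%:R * a) ^+ 2 = 1 by rewrite sin2cos2 hc expr0n /= subr0.
  split.
    by apply/eqP => h; move: hs; rewrite h expr0n /= => /eqP; rewrite eq_sym oner_eq0.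
  by rewrite VE hc hs expr0n /= mulr0 subr0 mulr1 div1r.
have hC := ghzC_rho0 F d0.
split; first exact: hC.
by rewrite /qfi hC; congr (_^-1); rewrite /k; ring.
Qed.
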